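(* Let $G$ be a group, let $S=\bigoplus_{g\in G}S_g$ be an epsilon-strongly $G$-graded ring, and let $I$ be a homogeneous ideal of $S$. Then the natural $G$-grading $S/I=\bigoplus_{g\in G}(S_g+I)/I$ of the factor ring is epsilon-strong.
   Context: Rings are associative, not necessarily unital; $XY$ denotes finite sums of products. A $G$-grading: $S=\bigoplus_gS_g$, $S_gS_h\subseteq S_{gh}$. The grading is epsilon-strong if $S_gS_{g^{-1}}S_g=S_g$ for all $g$ and each ring $S_gS_{g^{-1}}$ has a multiplicative identity element. An ideal $I$ is homogeneous if $I=\bigoplus_{g\in G}(I\cap S_g)$. *)

(* Defs.v *)
From Stdlib Require Import List ClassicalEpsilon.
Import ListNotations.


Record group_ops := GroupOps {
  gcar :> Type;
  gmul : gcar -> gcar -> gcar;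
  ginv : gcar -> gcar;
  gone : gcar }.
Arguments gmul {g} _ _.
Arguments ginv {g} _.

Definition is_group (G : group_ops) : Prop :=
  (forall a b c : G, gmul a (gmul b c) = gmul (gmul a b) c) /\
  (forall a : G, gmul (gone G) a = a /\ gmul a (gone G) = a) /\
  (forall a : G, gmul (ginv a) a = gone G /\ gmul a (ginv a) = gone G).

Record rng_ops := RngOps {
  rcar :> Type;
  rzero : rcar;
  radd : rcar -> rcar -> rcar;
  ropp : rcar -> rcar;
  rmul : rcar -> rcar -> rcar }.
Arguments radd {r} _ _.
Arguments ropp {r} _.
Arguments rmul {r} _ _.

Definition is_rng (R : rng_ops) : Prop :=
  (forall a b c : R, radd a (radd b c) = radd (radd a b) c) /\
  (forall a b : R, radd a b = radd b a) /\
  (forall a : R, radd (rzero R) a = a) /\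
  (forall a : R, radd (ropp a) a = rzero R) /\
  (forall a b c : R, rmul a (rmul b c) = rmul (rmul a b) c) /\
  (forall a b c : R, rmul a (radd b c) = radd (rmul a b) (rmul a c)) /\
  (forall a b c : R, rmul (radd a b) c = radd (rmul a c) (rmul b c)).

Definition rsum {R : rng_ops} (l : list R) : R := fold_right (@radd R) (rzero R) l.
Arguments rsum {R} l.

Definition add_subgroup {R : rng_ops} (A : R -> Prop) : Prop :=
  A (rzero R) /\ (forall x y, A x -> A y -> A (radd x y)) /\ (forall x, A x -> A (ropp x)).

Definition prod2 {R : rng_ops} (X Y : R -> Prop) : R -> Prop :=
  fun z => exists l : list (R * R),
    (forall p, In p l -> X (fst p) /\ Y (snd p)) /\
    z = rsum (map (fun p => rmul (fst p) (snd p)) l).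

Definition prod3 {R : rng_ops} (X Y Z : R -> Prop) : R -> Prop :=
  fun w => exists l : list (R * R * R),
    (forall p, In p l -> X (fst (fst p)) /\ Y (snd (fst p)) /\ Z (snd p)) /\
    w = rsum (map (fun p => rmul (rmul (fst (fst p)) (snd (fst p))) (snd p)) l).

Definition has_identity {R : rng_ops} (X : R -> Prop) : Prop :=
  exists e, X e /\ forall x, X x -> rmul e x = x /\ rmul x e = x.

Definition is_grading {R : rng_ops} {G : group_ops} (C : G -> R -> Prop) : Prop :=
  (forall g, add_subgroup (C g)) /\
  (forall g h x y, C g x -> C h y -> C (gmul g h) (rmul x y)) /\
  (forall x : R, exists l : list (G * R),
      NoDup (map fst l) /\ (forall p, In p l -> C (fst p) (snd p)) /\
      x = rsum (map snd l)) /\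
  (forall l : list (G * R),
      NoDup (map fst l) -> (forall p, In p l -> C (fst p) (snd p)) ->
      rsum (map snd l) = rzero R -> forall p, In p l -> snd p = rzero R).

Definition epsilon_strong {R : rng_ops} {G : group_ops} (C : G -> R -> Prop) : Prop :=
  is_grading C /\
  forall g : G,
    (forall x, prod3 (C g) (C (ginv g)) (C g) x <-> C g x) /\
    has_identity (prod2 (C g) (C (ginv g))).

Definition is_ideal {R : rng_ops} (I : R -> Prop) : Prop :=
  add_subgroup I /\ (forall s x, I x -> I (rmul s x)) /\ (forall s x, I x -> I (rmul x s)).

Definition homogeneous {R : rng_ops} {G : group_ops} (C : G -> R -> Prop) (I : R -> Prop) : Prop :=
  forall x, I x -> exists l : list (G * R),
    NoDup (map fst l) /\ (forall p, In p l -> I (snd p) /\ C (fst p) (snd p)) /\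
    x = rsum (map snd l).

Definition coset {R : rng_ops} (I : R -> Prop) (s : R) : R -> Prop :=
  fun t => I (radd t (ropp s)).

Definition qcar {R : rng_ops} (I : R -> Prop) : Type :=
  { A : R -> Prop | exists s, A = coset I s }.

Definition qcls {R : rng_ops} (I : R -> Prop) (s : R) : qcar I :=
  exist _ (coset I s) (ex_intro _ s eq_refl).

Definition qrep {R : rng_ops} (I : R -> Prop) (A : qcar I) : R :=
  proj1_sig (constructive_indefinite_description _ (proj2_sig A)).

Definition quot {R : rng_ops} (I : R -> Prop) : rng_ops :=
  @RngOps (qcar I) (qcls I (rzero R))
    (fun A B => qcls I (radd (qrep I A) (qrep I B)))
    (fun A => qcls I (ropp (qrep I A)))
    (fun A B => qcls I (rmul (qrep I A) (qrep I B))).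

Definition quot_grading {R : rng_ops} {G : group_ops} (C : G -> R -> Prop) (I : R -> Prop)
  : G -> quot I -> Prop :=
  fun g A => exists s, C g s /\ A = qcls I s.

(* Main.v *)
Require Import Defs.
From Stdlib Require Import List ClassicalEpsilon FunctionalExtensionality PropExtensionality ProofIrrelevance.
Import ListNotations.

Lemma addA (S : rng_ops) : is_rng S -> forall a b c : S, radd a (radd b c) = radd (radd a b) c.
Proof. intros H; apply H. all: auto. Qed.
Lemma addC (S : rng_ops) : is_rng S -> forall a b : S, radd a b = radd b a.
Proof. intros H; apply H. all: auto. Qed.
Lemma add0 (S : rng_ops) : is_rng S -> forall a : S, radd (rzero S) a = a.
Proof. intros H; apply H. all: auto. Qed.
Lemma addN (S : rng_ops) : is_rng S -> forall a : S, radd (ropp a) a = rzero S.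
Proof. intros H; apply H. all: auto. Qed.
Lemma mulA (S : rng_ops) : is_rng S -> forall a b c : S, rmul a (rmul b c) = rmul (rmul a b) c.
Proof. intros H; apply H. all: auto. Qed.
Lemma mulDr (S : rng_ops) : is_rng S -> forall a b c : S, rmul a (radd b c) = radd (rmul a b) (rmul a c).
Proof. intros H; apply H. all: auto. Qed.
Lemma mulDl (S : rng_ops) : is_rng S -> forall a b c : S, rmul (radd a b) c = radd (rmul a c) (rmul b c).
Proof. intros H; apply H. all: auto. Qed.

Lemma addr0 (S : rng_ops) : is_rng S -> forall a : S, radd a (rzero S) = a.
Proof. intros H a; rewrite addC, add0; auto. all: auto. Qed.
Lemma addrN (S : rng_ops) : is_rng S -> forall a : S, radd a (ropp a) = rzero S.
Proof. intros H a; rewrite addC, addN; auto. all: auto. Qed.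
Lemma addKl (S : rng_ops) : is_rng S -> forall a b : S, radd (ropp a) (radd a b) = b.
Proof. intros H a b; rewrite addA, addN, add0; auto. all: auto. Qed.
Lemma add_cancel (S : rng_ops) : is_rng S -> forall a b c : S, radd a b = radd a c -> b = c.
Proof. intros H a b c E. rewrite <- (addKl S H a b), E, addKl; auto. all: auto. Qed.
Lemma sub0_eq (S : rng_ops) : is_rng S -> forall a b : S, radd a (ropp b) = rzero S -> a = b.
Proof. intros H a b E. apply (add_cancel S H (ropp b)). rewrite addN, addC; auto. all: auto. Qed.
Lemma oppK (S : rng_ops) : is_rng S -> forall a : S, ropp (ropp a) = a.
Proof. intros H a. apply (add_cancel S H (ropp a)). rewrite addrN, addN; auto. all: auto. Qed.
Lemma opp0 (S : rng_ops) : is_rng S -> ropp (rzero S) = rzero S.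
Proof. intros H. rewrite <- (add0 S H (ropp (rzero S))) at 1. apply addrN; auto. all: auto. Qed.
Lemma oppD (S : rng_ops) : is_rng S -> forall a b : S, ropp (radd a b) = radd (ropp a) (ropp b).
Proof. intros H a b. apply (add_cancel S H (radd a b)). rewrite addrN.
  rewrite (addC S H (ropp a)), addA, <- (addA S H a), addrN, addr0, addrN; auto. all: auto. all: auto. Qed.
Lemma mul0l (S : rng_ops) : is_rng S -> forall a : S, rmul (rzero S) a = rzero S.
Proof. intros H a. apply (add_cancel S H (rmul (rzero S) a)). rewrite <- mulDl, add0, addr0; auto. all: auto. Qed.
Lemma mul0r (S : rng_ops) : is_rng S -> forall a : S, rmul a (rzero S) = rzero S.
Proof. intros H a. apply (add_cancel S H (rmul a (rzero S))). rewrite <- mulDr, add0, addr0; auto. all: auto. Qed.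
Lemma mulNl (S : rng_ops) : is_rng S -> forall a b : S, rmul (ropp a) b = ropp (rmul a b).
Proof. intros H a b. apply (add_cancel S H (rmul a b)). rewrite <- mulDl, addrN, addrN, mul0l; auto. all: auto. Qed.
Lemma mulNr (S : rng_ops) : is_rng S -> forall a b : S, rmul a (ropp b) = ropp (rmul a b).
Proof. intros H a b. apply (add_cancel S H (rmul a b)). rewrite <- mulDr, addrN, addrN, mul0r; auto. all: auto. Qed.

Lemma id1 (S : rng_ops) : is_rng S -> forall t a b : S,
  radd t (ropp b) = radd (radd t (ropp a)) (radd a (ropp b)).
Proof. intros H t a b. rewrite <- addA, (addKl S H a); auto. all: auto. Qed.
Lemma id_sym (S : rng_ops) : is_rng S -> forall a b : S,
  radd b (ropp a) = ropp (radd a (ropp b)).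
Proof. intros H a b. rewrite oppD, oppK, addC; auto. all: auto. Qed.
Lemma id2 (S : rng_ops) : is_rng S -> forall r1 r2 a b : S,
  radd (radd r1 r2) (ropp (radd a b)) = radd (radd r1 (ropp a)) (radd r2 (ropp b)).
Proof. intros H r1 r2 a b. rewrite oppD.
  rewrite <- !(addA S H r1). f_equal. rewrite !addA. f_equal. apply addC; auto. all: auto. Qed.
Lemma id3 (S : rng_ops) : is_rng S -> forall r1 r2 a b : S,
  radd (rmul r1 r2) (ropp (rmul a b)) =
  radd (rmul (radd r1 (ropp a)) r2) (rmul a (radd r2 (ropp b))).
Proof. intros H r1 r2 a b. rewrite mulDl, mulDr, mulNl, mulNr.
  rewrite <- addA. f_equal. rewrite addA, addN, add0; auto. all: auto. Qed.

Lemma sig_ext (S : rng_ops) (I : S -> Prop) (P Q : S -> Prop)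
  (p : exists s, P = coset I s) (q : exists s, Q = coset I s) :
  P = Q -> exist (fun A => exists s, A = coset I s) P p = exist _ Q q.
Proof. intros E; subst; f_equal; apply proof_irrelevance. Qed.

Lemma I0 (S : rng_ops) (I : S -> Prop) : is_ideal I -> I (rzero S).
Proof. intros H; apply H. Qed.
Lemma ID (S : rng_ops) (I : S -> Prop) : is_ideal I -> forall x y, I x -> I y -> I (radd x y).
Proof. intros H; apply H. Qed.
Lemma IN (S : rng_ops) (I : S -> Prop) : is_ideal I -> forall x, I x -> I (ropp x).
Proof. intros H; apply H. Qed.
Lemma IMl (S : rng_ops) (I : S -> Prop) : is_ideal I -> forall s x, I x -> I (rmul s x).
Proof. intros H; apply H. Qed.
Lemma IMr (S : rng_ops) (I : S -> Prop) : is_ideal I -> forall s x, I x -> I (rmul x s).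
Proof. intros H; apply H. Qed.

Lemma qcls_eq (S : rng_ops) (I : S -> Prop) : is_rng S -> is_ideal I ->
  forall a b, I (radd a (ropp b)) -> qcls I a = qcls I b.
Proof.
  intros HS HI a b Hab. unfold qcls. apply sig_ext.
  extensionality t. apply propositional_extensionality. unfold coset. split; intros Ht.
  - rewrite (id1 S HS t a b). apply ID; auto.
  - rewrite (id1 S HS t b a). apply ID; auto. rewrite (id_sym S HS). apply IN; auto.
Qed.

Lemma qcls_inj (S : rng_ops) (I : S -> Prop) : is_rng S -> is_ideal I ->
  forall a b, qcls I a = qcls I b -> I (radd a (ropp b)).
Proof.
  intros HS HI a b E. apply (f_equal (@proj1_sig _ _)) in E. simpl in E.
  change (coset I b a). rewrite <- E. unfold coset. rewrite addrN; auto. apply I0; auto.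
Qed.

Lemma qrep_spec (S : rng_ops) (I : S -> Prop) (A : qcar I) : qcls I (qrep I A) = A.
Proof.
  destruct A as [P Hp]. unfold qrep. simpl.
  destruct (constructive_indefinite_description _ Hp) as [s Hs]. simpl.
  unfold qcls. apply sig_ext. auto.
Qed.

Lemma qrep_rel (S : rng_ops) (I : S -> Prop) : is_rng S -> is_ideal I ->
  forall a, I (radd (qrep I (qcls I a)) (ropp a)).
Proof. intros HS HI a. apply qcls_inj; auto. apply qrep_spec. Qed.

Lemma qadd (S : rng_ops) (I : S -> Prop) : is_rng S -> is_ideal I ->
  forall a b, @radd (quot I) (qcls I a) (qcls I b) = qcls I (radd a b).
Proof.
  intros HS HI a b. simpl. apply qcls_eq; auto. rewrite id2; auto.
  apply ID; auto; apply qrep_rel; auto.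
Qed.

Lemma qopp (S : rng_ops) (I : S -> Prop) : is_rng S -> is_ideal I ->
  forall a, @ropp (quot I) (qcls I a) = qcls I (ropp a).
Proof.
  intros HS HI a. simpl. apply qcls_eq; auto. rewrite <- oppD; auto.
  apply IN; auto; apply qrep_rel; auto.
Qed.

Lemma qmul (S : rng_ops) (I : S -> Prop) : is_rng S -> is_ideal I ->
  forall a b, @rmul (quot I) (qcls I a) (qcls I b) = qcls I (rmul a b).
Proof.
  intros HS HI a b. simpl. apply qcls_eq; auto. rewrite id3; auto.
  apply ID; auto. apply IMr; auto; apply qrep_rel; auto. apply IMl; auto; apply qrep_rel; auto.
Qed.

Lemma qsum (S : rng_ops) (I : S -> Prop) : is_rng S -> is_ideal I ->
  forall (T : Type) (f : T -> S) (l : list T),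
  @rsum (quot I) (map (fun x => qcls I (f x)) l) = qcls I (rsum (map f l)).
Proof.
  intros HS HI T f l. induction l as [|x l IH]; simpl. reflexivity.
  rewrite IH. apply qadd; auto.
Qed.

Definition gdec (G : group_ops) (a b : G) : {a = b} + {a <> b} :=
  excluded_middle_informative (a = b).

Definition comp {S : rng_ops} {G : group_ops} (l : list (G * S)) (g : G) : S :=
  rsum (map (fun p => if gdec G (fst p) g then snd p else rzero S) l).

Lemma rsum_zero (S : rng_ops) (T : Type) (f : T -> S) (L : list T) : is_rng S ->
  (forall x, In x L -> f x = rzero S) -> rsum (map f L) = rzero S.
Proof.
  intros HS H. induction L as [|x L IH]; simpl. reflexivity.
  rewrite H by (left; auto). rewrite IH by (intros; apply H; right; auto). apply add0; auto.
Qed.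

Lemma rsum_app (S : rng_ops) (L1 L2 : list S) : is_rng S ->
  rsum (L1 ++ L2) = radd (rsum L1) (rsum L2).
Proof.
  intros HS. induction L1 as [|x L IH]; simpl. rewrite add0; auto.
  rewrite IH, addA; auto.
Qed.

Lemma rsum_map_add (S : rng_ops) (T : Type) (f h : T -> S) (L : list T) : is_rng S ->
  rsum (map (fun x => radd (f x) (h x)) L) = radd (rsum (map f L)) (rsum (map h L)).
Proof.
  intros HS. induction L as [|x L IH]; simpl. rewrite add0; auto.
  rewrite IH. rewrite <- !(addA S HS (f x)). f_equal.
  rewrite !addA by auto. f_equal. apply addC; auto.
Qed.

Lemma rsum_map_opp (S : rng_ops) (T : Type) (f : T -> S) (L : list T) : is_rng S ->
  rsum (map (fun x => ropp (f x)) L) = ropp (rsum (map f L)).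
Proof.
  intros HS. induction L as [|x L IH]; simpl. rewrite opp0; auto.
  rewrite IH, oppD; auto.
Qed.

Lemma comp_cons (S : rng_ops) (G : group_ops) (h : G) (x : S) l g :
  comp ((h, x) :: l) g = radd (if gdec G h g then x else rzero S) (comp l g).
Proof. reflexivity. Qed.

Lemma comp_notin (S : rng_ops) (G : group_ops) (l : list (G * S)) g : is_rng S ->
  ~ In g (map fst l) -> comp l g = rzero S.
Proof.
  intros HS H. unfold comp. apply rsum_zero; auto. intros p Hp.
  destruct (gdec G (fst p) g) as [e|]; auto. exfalso; apply H. rewrite <- e. apply in_map; auto.
Qed.

Lemma ind_sum (S : rng_ops) (G : group_ops) (D : list G) (h : G) (x : S) : is_rng S ->
  NoDup D -> In h D -> rsum (map (fun g => if gdec G h g then x else rzero S) D) = x.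
Proof.
  intros HS ND. induction ND as [|d D Hd ND IH]; intros Hin; simpl. destruct Hin.
  destruct (gdec G h d) as [e|ne].
  - subst. rewrite rsum_zero; auto. apply addr0; auto.
    intros g Hg. destruct (gdec G d g); auto. subst; contradiction.
  - destruct Hin as [e|Hin]. subst; contradiction. rewrite IH; auto. apply add0; auto.
Qed.

Lemma regroup (S : rng_ops) (G : group_ops) (l : list (G * S)) (D : list G) : is_rng S ->
  incl (map fst l) D -> NoDup D -> rsum (map snd l) = rsum (map (comp l) D).
Proof.
  intros HS. induction l as [|[h x] l IH]; intros Hinc ND; simpl.
  - symmetry. apply rsum_zero; auto.
  - unfold comp at 1. simpl. fold (comp l).
    change (radd x (rsum (map snd l)) =
      rsum (map (fun g => radd (if gdec G h g then x else rzero S) (comp l g)) D)).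
    rewrite rsum_map_add, ind_sum, IH; auto.
    + intros y Hy; apply Hinc; right; auto.
    + apply Hinc; left; auto.
Qed.

Lemma comp_in (S : rng_ops) (G : group_ops) (P : S -> Prop) (Q : G -> S -> Prop)
  (l : list (G * S)) g :
  P (rzero S) -> (forall x y, P x -> P y -> P (radd x y)) ->
  (forall p, In p l -> fst p = g -> P (snd p)) -> P (comp l g).
Proof.
  intros H0 HD. induction l as [|p l IH]; intros Hl; simpl. auto.
  unfold comp; simpl; fold (comp l g). apply HD.
  - destruct (gdec G (fst p) g); auto. apply Hl; auto. left; auto.
  - apply IH. intros; apply Hl; auto. right; auto.
Qed.

Lemma general_direct (S : rng_ops) (G : group_ops) (C : G -> S -> Prop) (l : list (G * S)) :
  is_rng S -> is_grading C -> (forall p, In p l -> C (fst p) (snd p)) ->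
  rsum (map snd l) = rzero S -> forall g, comp l g = rzero S.
Proof.
  intros HS HC Hl Hs g.
  set (D := nodup (gdec G) (map fst l)).
  destruct (in_dec (gdec G) g D) as [Hg|Hg].
  - destruct HC as (Hsub & _ & _ & Hdir).
    set (L := map (fun h => (h, comp l h)) D).
    assert (HL : forall p, In p L -> snd p = rzero S).
    { apply Hdir.
      - unfold L. rewrite map_map. simpl. rewrite map_id. apply NoDup_nodup.
      - unfold L. intros p Hp. apply in_map_iff in Hp. destruct Hp as [h [<- _]]. simpl.
        destruct (Hsub h) as (A0 & AD & _).
        apply (comp_in S G (C h) C); auto. intros p Hp <-. apply Hl; auto.
      - unfold L. rewrite map_map. simpl. rewrite <- Hs. symmetry. apply regroup; auto.
        + intros y Hy. apply nodup_In; auto.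
        + apply NoDup_nodup. }
    apply (HL (g, comp l g)). unfold L. apply in_map_iff. exists g; auto.
  - apply comp_notin; auto. intros Hin. apply Hg. apply nodup_In; auto.
Qed.

Lemma comp_nodup (S : rng_ops) (G : group_ops) (l : list (G * S)) g s : is_rng S ->
  NoDup (map fst l) -> In (g, s) l -> comp l g = s.
Proof.
  intros HS. induction l as [|[h x] l IH]; intros ND Hin; simpl. destruct Hin.
  inversion ND as [|? ? Hh ND']; subst. rewrite comp_cons.
  destruct Hin as [e|Hin].
  - inversion e; subst. destruct (gdec G g g) as [_|n]; [|contradiction].
    rewrite comp_notin; auto. apply addr0; auto.
  - destruct (gdec G h g) as [e|_].
    + subst. exfalso; apply Hh. change g with (fst (g, s)). apply in_map; auto.
    + rewrite IH; auto. apply add0; auto.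
Qed.

Lemma comp_app (S : rng_ops) (G : group_ops) (l1 l2 : list (G * S)) g : is_rng S ->
  comp (l1 ++ l2) g = radd (comp l1 g) (comp l2 g).
Proof. intros HS. unfold comp. rewrite map_app, rsum_app; auto. Qed.

Lemma comp_opp (S : rng_ops) (G : group_ops) (l : list (G * S)) g : is_rng S ->
  comp (map (fun p => (fst p, ropp (snd p))) l) g = ropp (comp l g).
Proof.
  intros HS. unfold comp. rewrite map_map, <- rsum_map_opp; auto. f_equal. apply map_ext.
  intros [h x]; simpl. destruct (gdec G h g); auto. rewrite opp0; auto.
Qed.

Lemma Cq_sub (G : group_ops) (S : rng_ops) (C : G -> S -> Prop) (I : S -> Prop) :
  is_rng S -> is_grading C -> is_ideal I -> forall g, add_subgroup (quot_grading C I g).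
Proof.
  intros HS HC HI g. destruct HC as (Hsub & _). destruct (Hsub g) as (H0 & HD & HN).
  split; [|split].
  - exists (rzero S); split; auto.
  - intros X Y [a [Ha ->]] [b [Hb ->]]. exists (radd a b); split; auto. apply qadd; auto.
  - intros X [a [Ha ->]]. exists (ropp a); split; auto. apply qopp; auto.
Qed.

Lemma Cq_mul (G : group_ops) (S : rng_ops) (C : G -> S -> Prop) (I : S -> Prop) :
  is_rng S -> is_grading C -> is_ideal I -> forall g h X Y,
  quot_grading C I g X -> quot_grading C I h Y -> quot_grading C I (gmul g h) (rmul X Y).
Proof.
  intros HS HC HI g h X Y [a [Ha ->]] [b [Hb ->]]. exists (rmul a b); split.
  apply HC; auto. apply qmul; auto.
Qed.

Lemma lift_list (G : group_ops) (S : rng_ops) (C : G -> S -> Prop) (I : S -> Prop)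
  (l : list (G * quot I)) :
  (forall p, In p l -> quot_grading C I (fst p) (snd p)) ->
  exists ls, l = map (fun p => (fst p, qcls I (snd p))) ls /\ forall p, In p ls -> C (fst p) (snd p).
Proof.
  induction l as [|[g X] l IH]; intros Hl.
  - exists []; split; auto. intros p [].
  - destruct (Hl (g, X) (or_introl eq_refl)) as [a [Ha HX]]. simpl in *.
    destruct IH as [ls [-> Hls]]. intros; apply Hl; right; auto.
    exists ((g, a) :: ls). split. simpl; subst; auto.
    intros p [<-|Hp]; auto.
Qed.

Lemma q_grading (G : group_ops) (S : rng_ops) (C : G -> S -> Prop) (I : S -> Prop) :
  is_rng S -> is_grading C -> is_ideal I -> homogeneous C I -> is_grading (quot_grading C I).
Proof.
  intros HS HC HI Hhom. split; [|split; [|split]].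
  - apply Cq_sub; auto.
  - apply Cq_mul; auto.
  - intros X. destruct HC as (_ & _ & Hdec & _).
    destruct (Hdec (qrep I X)) as [ls [ND [Hls Hsum]]].
    exists (map (fun p => (fst p, qcls I (snd p))) ls). split; [|split].
    + rewrite map_map. simpl. auto.
    + intros p Hp. apply in_map_iff in Hp. destruct Hp as [q [<- Hq]]. simpl.
      exists (snd q); split; auto.
    + rewrite map_map. simpl. rewrite (qsum S I HS HI _ snd ls). rewrite <- Hsum.
      symmetry. apply qrep_spec.
  - intros l ND Hl Hsum.
    destruct (lift_list G S C I l Hl) as [ls [-> Hls]].
    rewrite map_map in ND, Hsum. simpl in ND, Hsum.
    rewrite (qsum S I HS HI _ snd ls) in Hsum. simpl in Hsum.
    apply qcls_inj in Hsum; auto. rewrite opp0, addr0 in Hsum; auto.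
    destruct (Hhom _ Hsum) as [lt [_ [Hlt Hteq]]].
    set (L := ls ++ map (fun p => (fst p, ropp (snd p))) lt).
    assert (HL : forall g, comp L g = rzero S).
    { apply (general_direct S G C); auto.
      - intros p Hp. apply in_app_iff in Hp. destruct Hp as [Hp|Hp]. apply Hls; auto.
        apply in_map_iff in Hp. destruct Hp as [q [<- Hq]]. simpl.
        destruct HC as (Hsub & _). apply (Hsub (fst q)). apply Hlt; auto.
      - unfold L. rewrite map_app, rsum_app, map_map; auto. simpl.
        rewrite (rsum_map_opp S _ snd lt HS), <- Hteq. apply addrN; auto. }
    intros p Hp. apply in_map_iff in Hp. destruct Hp as [[g s] [<- Hq]]. simpl.
    apply qcls_eq; auto. rewrite opp0, addr0; auto.
    specialize (HL g). unfold L in HL. rewrite comp_app, comp_opp in HL; auto.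
    rewrite (comp_nodup S G ls g s) in HL; auto.
    apply sub0_eq in HL; auto. rewrite HL.
    apply (comp_in S G I C); auto. apply I0; auto. apply ID; auto.
    intros q Hq' _. apply Hlt; auto.
Qed.

Lemma prod2_lift (G : group_ops) (S : rng_ops) (C : G -> S -> Prop) (I : S -> Prop) :
  is_rng S -> is_ideal I -> forall g h X,
  prod2 (quot_grading C I g) (quot_grading C I h) X ->
  exists x, prod2 (C g) (C h) x /\ X = qcls I x.
Proof.
  intros HS HI g h X [l [Hl ->]]. induction l as [|[A B] l IH].
  - exists (rzero S). split; auto. exists []; split; auto. intros p [].
  - destruct (Hl (A, B) (or_introl eq_refl)) as [[a [Ha HA]] [b [Hb HB]]]. simpl in HA, HB, Ha, Hb. subst A B.
    destruct IH as [x [[l0 [Hl0 Hx]] Heq]]. intros; apply Hl; right; auto.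
    exists (radd (rmul a b) x). split.
    + exists ((a, b) :: l0). split. intros p [<-|Hp]; auto. simpl. rewrite Hx; auto.
    + transitivity (@radd (quot I) (@rmul (quot I) (qcls I a) (qcls I b)) (qcls I x)). { rewrite <- Heq. reflexivity. } rewrite qmul, qadd; auto.
Qed.

Lemma prod2_push (G : group_ops) (S : rng_ops) (C : G -> S -> Prop) (I : S -> Prop) :
  is_rng S -> is_ideal I -> forall g h x,
  prod2 (C g) (C h) x -> prod2 (quot_grading C I g) (quot_grading C I h) (qcls I x).
Proof.
  intros HS HI g h x [l [Hl ->]].
  exists (map (fun p => (qcls I (fst p), qcls I (snd p))) l). split.
  - intros p Hp. apply in_map_iff in Hp. destruct Hp as [q [<- Hq]]. simpl.
    destruct (Hl q Hq). split; eexists; eauto.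
  - rewrite map_map. rewrite <- (qsum S I HS HI). f_equal. apply map_ext. intros p. cbn [fst snd]. symmetry.
    apply qmul; auto.
Qed.

Lemma prod3_push (G : group_ops) (S : rng_ops) (C : G -> S -> Prop) (I : S -> Prop) :
  is_rng S -> is_ideal I -> forall g h k x,
  prod3 (C g) (C h) (C k) x ->
  prod3 (quot_grading C I g) (quot_grading C I h) (quot_grading C I k) (qcls I x).
Proof.
  intros HS HI g h k x [l [Hl ->]].
  exists (map (fun p => (qcls I (fst (fst p)), qcls I (snd (fst p)), qcls I (snd p))) l). split.
  - intros p Hp. apply in_map_iff in Hp. destruct Hp as [q [<- Hq]]. simpl.
    destruct (Hl q Hq) as (H1 & H2 & H3). split; [|split]; eexists; eauto.
  - rewrite map_map. rewrite <- (qsum S I HS HI). f_equal. apply map_ext. intros p. cbn [fst snd]. symmetry.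
    rewrite !qmul; auto.
Qed.

Lemma prod3_in (G : group_ops) (S : rng_ops) (C : G -> S -> Prop) (I : S -> Prop) :
  is_group G -> is_rng S -> is_grading C -> is_ideal I -> forall g X,
  prod3 (quot_grading C I g) (quot_grading C I (ginv g)) (quot_grading C I g) X ->
  quot_grading C I g X.
Proof.
  intros HG HS HC HI g X [l [Hl ->]].
  destruct (Cq_sub G S C I HS HC HI g) as (H0 & HD & _).
  induction l as [|p l IH]; simpl. auto.
  apply HD. 2: apply IH; intros; apply Hl; right; auto.
  destruct (Hl p (or_introl eq_refl)) as (H1 & H2 & H3).
  assert (E : gmul (gmul g (ginv g)) g = g).
  { destruct HG as (_ & Hone & Hinv). rewrite (proj2 (Hinv g)). apply Hone. }
  rewrite <- E. apply Cq_mul; auto. apply Cq_mul; auto.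
Qed.

Theorem proposition3p11 (G : group_ops) (S : rng_ops) (C : G -> S -> Prop) (I : S -> Prop) :
  is_group G -> is_rng S -> epsilon_strong C ->
  is_ideal I -> homogeneous C I ->
  epsilon_strong (quot_grading C I).
Proof.
  intros HG HS [HC Heps] HI Hhom. split.
  - apply q_grading; auto.
  - intros g. destruct (Heps g) as [H3 [e [He Hid]]]. split.
    + intros X. split.
      * apply prod3_in; auto.
      * intros [s [Hs ->]]. apply prod3_push; auto. apply H3; auto.
    + exists (qcls I e). split.
      * apply prod2_push; auto.
      * intros X HX. destruct (prod2_lift G S C I HS HI g (ginv g) X HX) as [x [Hx ->]].
        destruct (Hid x Hx) as [E1 E2].
        rewrite !qmul, E1, E2; auto.
Qed.
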